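(* For any $t\in(0,1)$ there exists a real symmetric matrix $\mathbf{A}$ of size $\lceil(4t)^{-1}\rceil$ such that, for any positive integers $n_{\mathrm{v}},k$ with $n_{\mathrm{v}}k<(8t)^{-1}$ (i.e. stochastic Lanczos quadrature using fewer than $(8t)^{-1}$ matrix–vector products) and any unit vectors $\mathbf{v}_1,\dots,\mathbf{v}_{n_{\mathrm{v}}}$, the output satisfies $$d_{\mathrm{W}}\Big(\Phi[\mathbf{A}],\tfrac1{n_{\mathrm{v}}}\textstyle\sum_{i=1}^{n_{\mathrm{v}}}\mathrm{GQ}_k(\Psi[\mathbf{A},\mathbf{v}_i])\Big)>t\,I[\mathbf{A}],$$ where $I[\mathbf{A}]=|\lambda_{\max}[\mathbf{A}]-\lambda_{\min}[\mathbf{A}]|$.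
   Context: $\Phi[\mathbf{A}](x)=\frac1n\#\{i:\lambda_i[\mathbf{A}]\le x\}$ is the CESM of an $n\times n$ symmetric $\mathbf{A}$; $\Psi[\mathbf{A},\mathbf{v}](x)=\mathbf{v}^{\mathsf T}\mathbb{1}[\mathbf{A}\le x]\mathbf{v}$ where $\mathbb{1}[\mathbf{A}\le x]$ is the orthogonal projector onto eigenvectors with eigenvalues $\le x$. $\mathrm{GQ}_k(\mu)$ is the $k$-point Gaussian quadrature rule of $\mu$ (the discrete distribution $\sum_{j=1}^k d_j\mathbb{1}[\theta_j\le x]$ whose moments agree with those of $\mu$ up to degree $2k-1$), which for $\mu=\Psi[\mathbf{A},\mathbf{v}]$ is computed from $k$ steps of the Lanczos algorithm (using $k$ matrix–vector products). $d_{\mathrm{W}}(\mu,\nu)=\int|\mu(x)-\nu(x)|\,dx$. *)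

(* Defs.v *)
From HB Require Import structures.
From mathcomp Require Import all_boot all_order all_algebra.
From mathcomp Require Import all_classical all_reals.
From mathcomp Require Import ereal measure lebesgue_measure lebesgue_integral.
Set Implicit Arguments. Unset Strict Implicit. Unset Printing Implicit Defensive.
Import Order.TTheory GRing.Theory Num.Theory.
Local Open Scope ring_scope.

Section Defs.
Variable R : realType.

(* Orthogonal eigendecomposition A = Q^T diag(lam) Q, Q orthogonal.
   Row j of Q is a unit eigenvector with eigenvalue lam j. *)
Definition spectral_decomp (N : nat) (A Q : 'M[R]_N) (lam : 'I_N -> R) : Prop :=
  Q *m Q^T = 1%:M /\ A = Q^T *m diag_mx (\row_j lam j) *m Q.

Definition cesm (N : nat) (lam : 'I_N -> R) (x : R) : R :=
  N%:R^-1 * (#|[set i : 'I_N | lam i <= x]|)%:R.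

Definition spec_proj (N : nat) (Q : 'M[R]_N) (lam : 'I_N -> R) (x : R) : 'M[R]_N :=
  Q^T *m diag_mx (\row_j (if lam j <= x then 1 else 0)) *m Q.

Definition wsm (N : nat) (Q : 'M[R]_N) (lam : 'I_N -> R) (v : 'cV[R]_N) (x : R) : R :=
  (v^T *m spec_proj Q lam x *m v) 0 0.

(* Psi[A,v] is the discrete distribution with atoms lam j of mass ((Q v)_j)^2;
   its p-th moment \int x^p dPsi[A,v](x) is *)
Definition wsm_moment (N : nat) (Q : 'M[R]_N) (lam : 'I_N -> R) (v : 'cV[R]_N)
    (p : nat) : R :=
  \sum_(j < N) ((Q *m v) j 0) ^+ 2 * lam j ^+ p.

Definition disc_cdf (k : nat) (theta d : 'I_k -> R) (x : R) : R :=
  \sum_(j < k) (if theta j <= x then d j else 0).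

Definition disc_moment (k : nat) (theta d : 'I_k -> R) (p : nat) : R :=
  \sum_(j < k) d j * theta j ^+ p.

(* (theta, d) is the k-point Gaussian quadrature rule GQ_k(Psi[A,v]):
   a k-point rule whose moments agree with those of Psi[A,v] up to degree 2k-1. *)
Definition is_GQ_wsm (N k : nat) (Q : 'M[R]_N) (lam : 'I_N -> R) (v : 'cV[R]_N)
    (theta d : 'I_k -> R) : Prop :=
  forall p : nat, (p <= 2 * k - 1)%N -> disc_moment theta d p = wsm_moment Q lam v p.

(* I[A] = |lambda_max - lambda_min| = max_{i,j} |lambda_i - lambda_j| *)
Definition spread (N : nat) (lam : 'I_N -> R) : R :=
  \big[Num.max/0]_(i < N) \big[Num.max/0]_(j < N) `|lam i - lam j|.

Definition unit_vec (N : nat) (v : 'cV[R]_N) : Prop :=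
  \sum_(j < N) (v j 0) ^+ 2 = 1.

(* Wasserstein distance d_W(mu,nu) = \int_R |mu(x) - nu(x)| dx (Lebesgue) *)
Definition dW (F G : R -> R) : \bar R :=
  (\int[@lebesgue_measure R]_(x in [set: R]) (`|F x - G x|)%:E)%E.

End Defs.

(* Main.v *)
Require Import Defs.
From HB Require Import structures.
From mathcomp Require Import all_boot all_order all_algebra.
From mathcomp Require Import all_classical all_reals.
From mathcomp Require Import ereal measure lebesgue_measure lebesgue_integral.
From mathcomp Require Import measurable_realfun.
From mathcomp Require Import ring lra zify.
Import Order.TTheory GRing.Theory Num.Theory.
Local Open Scope ring_scope.
Section Aux.
Variable R : realType.

Lemma mstep (a c : R) : measurable_fun setT (fun x : R => if a <= x then c else 0).
Proof.
have -> : (fun x : R => if a <= x then c else 0) =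
   (fun x => c) \* (fun x : R => if a <= x then 1 else 0).
  by apply/funext => x /=; case: ifP; rewrite ?mulr1 ?mulr0.
apply: measurable_funM; first exact: measurable_cst.
apply: nondecreasing_measurable => // x y xy.
case: ifP => ax; case: ifP => ay //.
by rewrite (le_trans ax xy) in ay.

Qed.

Lemma cesm_ext N (lam : 'I_N -> R) x y :
  (forall i, (lam i <= x) = (lam i <= y)) -> cesm lam x = cesm lam y.
Proof.
move=> h; rewrite /cesm; congr (_ * _%:R); apply: eq_card => i.
by rewrite !inE h.
Qed.

Lemma mcesm N (lam : 'I_N -> R) : measurable_fun setT (cesm lam).
Proof.
apply: nondecreasing_measurable => // x y xy.
rewrite /cesm ler_wpM2l // ?invr_ge0 ?ler0n // ler_nat.
apply: subset_leq_card; apply/fintype.subsetP => i; rewrite !inE => h.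
exact: le_trans h xy.
Qed.


Lemma card_free (N : nat) (T : finType) (P : 'I_N -> T -> bool) :
  (0 < N)%N -> (forall j j' l, P j l -> P j' l -> j = j') ->
  (N - #|T| <= #|[pred j | [forall l, ~~ P j l]]|)%N.
Proof.
move=> N0 uniqI.
pose j0 := Ordinal N0.
pose f l := odflt j0 [pick j | P j l].
have sub : [set j | ~~ [forall l, ~~ P j l]] \subset [set f x | x in T].
  apply/fintype.subsetP => j; rewrite inE => /forallPn[l]; rewrite negbK => hl.
  apply/imsetP; exists l => //; rewrite /f; case: pickP => [j' hj'|/(_ j)].
    by rewrite (uniqI _ _ _ hl hj').
  by rewrite hl.
have c1 := subset_leq_card sub.
have c2 := leq_imset_card f T.
have c3 := cardC [pred j | [forall l, ~~ P j l]].
have e : #|[set j | ~~ [forall l, ~~ P j l]]| = #|[predC [pred j | [forall l, ~~ P j l]]]|.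
  by apply: eq_card => j; rewrite !inE.
rewrite card_ord in c3.
rewrite e in c1.
have c4 := leq_trans c1 c2.
apply: leq_trans (leq_sub2l N c4) _; by rewrite -{1}c3 addnK.
Qed.

Lemma cesm_jump N (lam : 'I_N -> R) (j : 'I_N) (u : R) :
  0 < u -> u <= 1 -> (forall a b, a != b -> 1 <= `|lam a - lam b|) ->
  cesm lam (lam j) = cesm lam (lam j - u) + N%:R^-1.
Proof.
move=> u0 u1 sep.
rewrite /cesm (_ : [set i | lam i <= lam j] = j |: [set i | lam i <= lam j - u]).
  rewrite cardsU1 inE (_ : (lam j <= lam j - u) = false); last first.
    by apply/negbTE; rewrite -ltNge; lra.
  by rewrite /= add1n -addn1 natrD mulrDr mulr1.
apply/setP => i; rewrite !inE; case: (eqVneq i j) => [->|ne] /=.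
  by rewrite lexx.
move: (sep _ _ ne); rewrite ler_normr => /orP[] h; apply/idP/idP => h4; lra.
Qed.
End Aux.
Section Key.
Variable R : realType.
Local Open Scope classical_set_scope.

Lemma key N (lam : 'I_N -> R) (T : finType) (th : T -> R) (G : R -> R) :
  (0 < N)%N ->
  (forall a b, a != b -> 1 <= `|lam a - lam b|) ->
  measurable_fun setT G ->
  (forall x y, (forall l, (th l <= x) = (th l <= y)) -> G x = G y) ->
  (((N - #|T|)%:R / (2 * N)%:R)%:E <= dW (cesm lam) G)%E.
Proof.
move=> N0 sep mG cG.
set h := fun x => `|cesm lam x - G x|.
have mh : measurable_fun setT (fun x => (h x)%:E).
  apply/measurable_EFinP; apply: measurableT_comp; first exact: normr_measurable.
  by apply: measurable_funB; [exact: mcesm | exact: mG].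
have h0 x : (0 <= (h x)%:E)%E by rewrite lee_fin /h normr_ge0.
pose L j := `[lam j - 2^-1, lam j[ : set R.
pose Rr j := `[lam j, lam j + 2^-1[ : set R.
pose F j := L j `|` Rr j.
have mF j : measurable (F j) by apply: measurableU; exact: measurable_itv.
pose inI j x := (lam j - 2^-1 <= x) && (x < lam j + 2^-1).
have FE j x : F j x -> inI j x.
  rewrite /F /L /Rr /inI /= !in_itv /= => -[] /andP[h1 h2]; apply/andP; split; lra.
have uniqI j j' x : inI j x -> inI j' x -> j = j'.
  move=> /andP[h1 h2] /andP[h3 h4]; case: (eqVneq j j') => // /sep.
  rewrite ler_normr => /orP[] h5; exfalso; lra.
pose free j := [forall l, ~~ inI j (th l)].
pose s := enum [pred j | free j].
have trivF : trivIset [set` s] F.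
  move=> i j _ _ [x [/FE hi /FE hj]]; exact: uniqI hi hj.
apply: (@le_trans _ _ (\sum_(j <- s) \int[lebesgue_measure]_(x in F j) (h x)%:E)%E).
  rewrite big_enum /=.
  apply: (@le_trans _ _ (\sum_(j in [pred j | free j]) ((2 * N)%:R^-1)%:E)%E).
    rewrite sumEFin lee_fin sumr_const -[leRHS]mulr_natl.
    rewrite ler_wpM2r ?invr_ge0 ?ler0n // ler_nat.
    exact: (@card_free _ _ (fun j l => inI j (th l)) N0 (fun j j' l => uniqI j j' (th l))).
  apply: lee_sum => j fj.
  have cj x : F j x -> G x = G (lam j).
    move=> /FE /andP[h1 h2]; apply: cG => l.
    case/nandP: (forallP fj l); rewrite -?ltNge -?leNgt => h3; apply/idP/idP => h4; lra.
  have cL x : L j x -> cesm lam x = cesm lam (lam j - 2^-1).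
    rewrite /L /= in_itv /= => /andP[h1 h2]; apply: cesm_ext => i.
    case: (eqVneq i j) => [->|ne]; first by apply/idP/idP => h4; lra.
    move: (sep _ _ ne); rewrite ler_normr => /orP[] h5; apply/idP/idP => h4; lra.
  have cR x : Rr j x -> cesm lam x = cesm lam (lam j).
    rewrite /Rr /= in_itv /= => /andP[h1 h2]; apply: cesm_ext => i.
    case: (eqVneq i j) => [->|ne]; first by apply/idP/idP => h4; lra.
    move: (sep _ _ ne); rewrite ler_normr => /orP[] h5; apply/idP/idP => h4; lra.
  have jump := @cesm_jump _ _ lam j (2^-1) ltac:(lra) ltac:(lra) sep.
  rewrite ge0_integral_setU //; first last.
  - rewrite disj_set2E; apply/eqP; apply/seteqP; split => x //=.
    rewrite /L /Rr /= !in_itv /= => -[/andP[h1 h2] /andP[h3 h4]]; lra.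
  - exact: measurable_funS mh.
  - exact: measurable_itv.
  - exact: measurable_itv.
  rewrite (eq_integral (cst (`|cesm lam (lam j - 2^-1) - G (lam j)|)%:E)); last first.
    by move=> x; rewrite inE => hx; rewrite /h /= cL // cj //; left.
  rewrite [X in (_ <= _ + X)%E](eq_integral (cst (`|cesm lam (lam j) - G (lam j)|)%:E)); last first.
    by move=> x; rewrite inE => hx; rewrite /h /= cR // cj //; right.
  rewrite !integral_cst; [|exact: measurable_itv|exact: measurable_itv].
  rewrite /L /Rr. have m1 := lebesgue_measure_itv `[lam j - 2^-1, lam j[%R.
  have m2 := lebesgue_measure_itv `[lam j, lam j + 2^-1[%R.
  rewrite /= lte_fin ifT in m1; last lra.
  rewrite /= lte_fin ifT in m2; last lra.
  rewrite [X in (_ <= _ * X + _)%E](_ : _ = ((lam j)%:E - (lam j - 2^-1)%:E)%E); last exact: m1.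
  rewrite [X in (_ <= _ + _ * X)%E](_ : _ = ((lam j + 2^-1)%:E - (lam j)%:E)%E); last exact: m2.
  rewrite -!EFinB -!EFinM -EFinD lee_fin.
  rewrite jump.
  set a := cesm lam (lam j - 2^-1); set c := G (lam j).
  have tri : N%:R^-1 <= `|a - c| + `|a + N%:R^-1 - c|.
    have e : N%:R^-1 = (a + N%:R^-1 - c) - (a - c) by ring.
    rewrite [X in X <= _]e; apply: le_trans (ler_norm _) _.
    by apply: le_trans (ler_normB _ _) _; rewrite addrC.
  rewrite natrM invfM.
  have -> : lam j - (lam j - 2^-1) = 2^-1 by ring.
  have -> : lam j + 2^-1 - lam j = 2^-1 by ring.
  lra.
have mhU : measurable_fun (\big[setU/set0]_(i <- s) F i) (fun x => (h x)%:E).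
  exact: (measurable_funS measurableT (@subsetT _ _) mh).
have E := @ge0_integral_bigsetU _ _ _ lebesgue_measure _ F (fun x => (h x)%:E) s mF (enum_uniq _) trivF mhU (fun x _ => h0 x).
rewrite /dW -E.
apply: ge0_subset_integral => //.
by apply: bigsetU_measurable => j _; exact: mF.
Qed.

End Key.
Section Spec.
Variable R : realType.

Lemma dist1 (m n : nat) : m != n -> 1 <= `|m.+1%:R - n.+1%:R : R|.
Proof.
move=> mn.
have h : forall a b : nat, (a < b)%N -> 1 <= (b%:R - a%:R : R).
  move=> a b ab; rewrite -natrB; last exact: ltnW.
  by rewrite ler1n subn_gt0.
case: (ltngtP m n) mn => // h1 _.
  have := h _ _ h1; rewrite -!natr1 => h2.
  rewrite ler_normr; apply/orP; right; lra.
have := h _ _ h1; rewrite -!natr1 => h2.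
rewrite ler_normr; apply/orP; left; lra.
Qed.

Lemma spec_lam N (Q : 'M[R]_N) (lam : 'I_N -> R) :
  spectral_decomp (diag_mx (\row_(i < N) (i.+1)%:R)) Q lam ->
  (forall j, 1 <= lam j <= N%:R) /\ (forall a b, a != b -> 1 <= `|lam a - lam b|).
Proof.
move=> [H1 H2].
have E j i : Q j i * (i.+1)%:R = lam j * Q j i.
  have : Q *m diag_mx (\row_(i < N) (i.+1)%:R) = diag_mx (\row_j lam j) *m Q.
    by rewrite H2 !mulmxA H1 mul1mx.
  move/matrixP/(_ j i); rewrite mul_mx_diag mul_diag_mx !mxE.
  done.
have nz j i : Q j i != 0 -> lam j = (i.+1)%:R.
  move=> qn; apply: (mulIf qn); rewrite -E mulrC //.
have QQ a b : \sum_i Q a i * Q b i = (a == b)%:R.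
  have := congr1 (fun M : 'M[R]_N => M a b) H1; rewrite /= !mxE => <-.
  by apply: eq_bigr => i _; rewrite mxE.
have ex j : exists i, Q j i != 0.
  apply/existsP; apply: contraT; rewrite negb_exists => /forallP h.
  have := QQ j j; rewrite eqxx big1 ?(oner_neq0) //.
    by move/esym/eqP; rewrite oner_eq0.
  by move=> i _; move: (h i); rewrite negbK => /eqP ->; rewrite mul0r.
have uniqi j i i' : Q j i != 0 -> Q j i' != 0 -> i = i'.
  move=> /nz h1 /nz h2; apply/val_inj/eqP; rewrite /= -eqSS -(eqr_nat R).
  by rewrite -h1 -h2.
split.
  move=> j; have [i qi] := ex j; rewrite (nz _ _ qi).
  apply/andP; split; last by rewrite ler_nat /= ltn_ord.
  have h0 : (0:R) <= i%:R := ler0n _ _.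
  by rewrite ler1n.
move=> a b ab; have [i qi] := ex a; have [i' qi'] := ex b.
rewrite (nz _ _ qi) (nz _ _ qi').
case: (eqVneq i i') => [eii|neq].
  exfalso; subst i'.
  have := QQ a b; rewrite (negbTE ab) (bigD1 i) //= big1 ?addr0.
    by move/eqP; rewrite mulf_eq0 (negbTE qi) (negbTE qi').
  move=> i2 ni2; have [q0|q1] := eqVneq (Q a i2) 0; first by rewrite q0 mul0r.
  by rewrite (uniqi _ _ _ q1 qi) eqxx in ni2.
by apply: dist1; apply: contra neq => /eqP e; apply/eqP/val_inj.
Qed.

End Spec.
Theorem theorem4 (R : realType) (t : R) :
  0 < t < 1 ->
  exists (N : nat) (A : 'M[R]_N),
    [/\ N%:Z = Num.ceil (4 * t)^-1,
        A^T = A,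
        (exists (Q : 'M[R]_N) (lam : 'I_N -> R), spectral_decomp A Q lam) &
        forall (Q : 'M[R]_N) (lam : 'I_N -> R), spectral_decomp A Q lam ->
        forall (nv k : nat), (0 < nv)%N -> (0 < k)%N ->
          (nv * k)%:R < (8 * t)^-1 ->
        forall v : 'I_nv -> 'cV[R]_N, (forall i, unit_vec (v i)) ->
        forall theta d : 'I_nv -> 'I_k -> R,
          (forall i, is_GQ_wsm Q lam (v i) (theta i) (d i)) ->
          ((t * spread lam)%:E <
             dW (cesm lam)
                (fun x => (nv%:R^-1 * \sum_(i < nv) disc_cdf (theta i) (d i) x)%R))%E].
Proof.
move=> /andP[t0 t1].
set x := (4 * t)^-1.
have x0 : 0 < x by rewrite invr_gt0 mulr_gt0.
have c0 : 0 < Num.ceil x by rewrite ceil_gt0.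
pose N := `|Num.ceil x|%N.
have NZ : N%:Z = Num.ceil x by rewrite /N gez0_abs // ltW.
have NR : N%:R = (Num.ceil x)%:~R :> R by rewrite -NZ.
have N0 : (0 < N)%N by rewrite -(ltz_nat 0) NZ.
have Nge : x <= N%:R by rewrite NR ceil_ge.
have Nlt : N%:R - 1 < x by rewrite NR -(intrB _ _ 1) ceilB1_lt.
exists N, (diag_mx (\row_(i < N) (i.+1)%:R)); split => //.
- exact: tr_diag_mx.
- exists 1%:M, (fun i : 'I_N => (i.+1)%:R); split.
    by rewrite trmx1 mulmx1.
  by rewrite trmx1 mul1mx mulmx1.
move=> Q lam sd nv k nv0 k0 hm v _ theta d _.
have [bnd sep] := @spec_lam R _ _ _ sd.
pose th (l : ('I_nv * 'I_k)%type) := theta l.1 l.2.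
set G := (fun x => (nv%:R^-1 * \sum_(i < nv) disc_cdf (theta i) (d i) x)%R).
have mG : measurable_fun setT G.
  apply: measurable_funM; first exact: measurable_cst.
  apply: measurable_sum => i; rewrite /disc_cdf; apply: measurable_sum => j.
  exact: mstep.
have cG : forall x y, (forall l, (th l <= x) = (th l <= y)) -> G x = G y.
  move=> a b hab; rewrite /G; congr (_ * _); apply: eq_bigr => i _.
  by rewrite /disc_cdf; apply: eq_bigr => j _; rewrite (hab (i, j)).
have K := @key R N lam _ th G N0 sep mG cG.
rewrite card_prod !card_ord in K.
have N1 : 1 <= N%:R :> R by rewrite ler1n.
have sp : spread lam <= N%:R - 1.
  rewrite /spread; apply: bigmax_le => [|i _]; first lra.
  apply: bigmax_le => [|j _]; first lra.
  move: (bnd i) (bnd j) => /andP[h1 h2] /andP[h3 h4].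
  rewrite ler_norml; apply/andP; split; lra.
have tn0 : t != 0 by rewrite gt_eqF.
have e8 : (8 * t)^-1 = x / 2 by rewrite /x; field; rewrite tn0.
have m0 : 0 <= (nv * k)%:R :> R := ler0n _ _.
have M2 : 2 * (nv * k)%:R < N%:R :> R by lra.
have MN : (nv * k <= N)%N by rewrite -(ler_nat R); lra.
rewrite natrB // in K.
have tx : t * x = 4^-1 by rewrite /x; field; rewrite tn0.
have h1 : t * (N%:R - 1) < 4^-1 :> R by rewrite -tx ltr_pM2l.
have h2 : 4^-1 < (N%:R - (nv * k)%:R) / (2 * N)%:R :> R.
  have e2 : ((2 * N)%N%:R : R) = 2 * N%:R := natrM _ 2 N.
  rewrite e2 ltr_pdivlMr; last lra.
  lra.
apply: lt_le_trans K; rewrite lte_fin.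
apply: le_lt_trans (ler_wpM2l (ltW t0) sp) _.
exact: lt_trans h1 h2.
Qed.
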